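(* Let $a,b,c\in\mathbb{R}^n$. Then the set $\{X\in\mathbb{S}^n_+:\ a^\top Xb\ge 0,\ b^\top Xc\ge 0,\ a^\top Xc\ge 0\}$ is rank-one generated.
   Context: $\mathbb{S}^n_+$ is the cone of real symmetric positive semidefinite $n\times n$ matrices. A closed convex cone $\mathcal{S}\subseteq\mathbb{S}^n_+$ is rank-one generated (ROG) if $\mathcal{S}=\mathrm{conv}(\mathcal{S}\cap\{xx^\top:x\in\mathbb{R}^n\})$. *)

(* Defs.v *)
From HB Require Import structures.
From mathcomp Require Import all_boot all_order all_algebra.
From mathcomp Require Import reals.
Set Implicit Arguments. Unset Strict Implicit. Unset Printing Implicit Defensive.
Import Order.TTheory GRing.Theory Num.Theory.
Local Open Scope ring_scope.

Definition psd (R : realType) (n : nat) (X : 'M[R]_n) : Prop :=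
  X^T = X /\ forall x : 'cV[R]_n, 0 <= (x^T *m X *m x) 0 0.

Definition bform (R : realType) (n : nat) (u : 'cV[R]_n) (X : 'M[R]_n) (v : 'cV[R]_n) : R :=
  (u^T *m X *m v) 0 0.

Definition is_xxT (R : realType) (n : nat) (X : 'M[R]_n) : Prop :=
  exists x : 'cV[R]_n, X = x *m x^T.

Definition conv_hull (R : realType) (n : nat) (S : 'M[R]_n -> Prop) : 'M[R]_n -> Prop :=
  fun X => exists (k : nat) (l : 'I_k -> R) (Y : 'I_k -> 'M[R]_n),
    (forall i, 0 <= l i) /\ \sum_(i < k) l i = 1 /\ (forall i, S (Y i)) /\
    X = \sum_(i < k) l i *: Y i.

Definition ROG (R : realType) (n : nat) (S : 'M[R]_n -> Prop) : Prop :=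
  forall X, S X <-> conv_hull (fun Y => S Y /\ is_xxT Y) X.

Definition Sabc (R : realType) (n : nat) (a b c : 'cV[R]_n) : 'M[R]_n -> Prop :=
  fun X => psd X /\ 0 <= bform a X b /\ 0 <= bform b X c /\ 0 <= bform a X c.

(* Main.v *)
Require Import Defs.
From HB Require Import structures.
From mathcomp Require Import all_boot all_order all_algebra.
From mathcomp Require Import reals.
From mathcomp Require Import ring lra zify.
Set Implicit Arguments. Unset Strict Implicit. Unset Printing Implicit Defensive.
Import Order.TTheory GRing.Theory Num.Theory.
Local Open Scope ring_scope.

Lemma bformDl (R : realType) n (u1 u2 : 'cV[R]_n) X v :
  bform (u1 + u2) X v = bform u1 X v + bform u2 X v.
Proof. by rewrite /bform linearD /= !mulmxDl mxE. Qed.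

Lemma bformZl (R : realType) n (k : R) (u : 'cV[R]_n) X v :
  bform (k *: u) X v = k * bform u X v.
Proof. by rewrite /bform linearZ /= -!scalemxAl mxE. Qed.

Lemma bformDr (R : realType) n (u : 'cV[R]_n) X v1 v2 :
  bform u X (v1 + v2) = bform u X v1 + bform u X v2.
Proof. by rewrite /bform !mulmxDr mxE. Qed.

Lemma bformZr (R : realType) n (k : R) (u : 'cV[R]_n) X v :
  bform u X (k *: v) = k * bform u X v.
Proof. by rewrite /bform -!scalemxAr mxE. Qed.

Lemma bformDm (R : realType) n (u : 'cV[R]_n) X Y v :
  bform u (X + Y) v = bform u X v + bform u Y v.
Proof. by rewrite /bform mulmxDr mulmxDl mxE. Qed.

Lemma bformZm (R : realType) n (k : R) (u : 'cV[R]_n) X v :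
  bform u (k *: X) v = k * bform u X v.
Proof. by rewrite /bform -scalemxAr -scalemxAl mxE. Qed.

Lemma bformNm (R : realType) n (u : 'cV[R]_n) X v :
  bform u (- X) v = - bform u X v.
Proof. by rewrite -scaleN1r bformZm mulN1r. Qed.

Lemma bform_sum (R : realType) n (u : 'cV[R]_n) k (F : 'I_k -> 'M[R]_n) v :
  bform u (\sum_(i < k) F i) v = \sum_(i < k) bform u (F i) v.
Proof. by rewrite /bform mulmx_sumr mulmx_suml summxE. Qed.

Lemma bformC (R : realType) n (u : 'cV[R]_n) X v :
  X^T = X -> bform u X v = bform v X u.
Proof.
move=> sX; rewrite /bform -[in RHS]sX.
have -> : v^T *m X^T *m u = (u^T *m X *m v)^T by rewrite !trmx_mul trmxK mulmxA.
by rewrite [RHS]mxE.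
Qed.

Definition dot (R : realType) n (u v : 'cV[R]_n) : R := (u^T *m v) 0 0.

Lemma bform_rank1 (R : realType) n (u x v : 'cV[R]_n) :
  bform u (x *m x^T) v = dot u x * dot v x.
Proof.
rewrite /bform /dot mulmxA -(mulmxA _ x^T) mxE big_ord1.
have -> : x^T *m v = (v^T *m x)^T by rewrite trmx_mul trmxK.
by rewrite [X in _ * X]mxE.
Qed.

Lemma dotXy (R : realType) n (u : 'cV[R]_n) X y : dot u (X *m y) = bform u X y.
Proof. by rewrite /dot /bform mulmxA. Qed.

Lemma bform_expand (R : realType) n (X : 'M[R]_n) z y t :
  X^T = X ->
  bform (z + t *: y) X (z + t *: y) =
  bform z X z + 2 * t * bform z X y + t ^+ 2 * bform y X y.
Proof.
move=> sX; rewrite !bformDl !bformDr !bformZl !bformZr (bformC y z sX); ring.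
Qed.

Lemma CS (R : realType) n (X : 'M[R]_n) u v :
  psd X -> bform u X v ^+ 2 <= bform u X u * bform v X v.
Proof.
move=> [sX pX0]; have pX : forall z, 0 <= bform z X z := pX0.
have uu0 := pX u; have vv0 := pX v.
have E t := bform_expand v u t sX.
have {}E t : bform (v + t *: u) X (v + t *: u) = bform v X v + 2 * t * bform u X v + t ^+ 2 * bform u X u by rewrite E (bformC v u sX).
set uu := bform u X u in uu0 E *; set vv := bform v X v in vv0 E *;
set uv := bform u X v in E *.
have [uu_gt0|] := ltrP 0 uu.
  have := pX (v + (- (uv / uu)) *: u); rewrite E => H.
  have H2 : 0 <= vv - uv ^+ 2 / uu.
    suff -> : vv - uv ^+ 2 / uu = vv + 2 * - (uv / uu) * uv + (- (uv / uu)) ^+ 2 * uu by [].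
    by field; rewrite gt_eqF.
  rewrite subr_ge0 ler_pdivrMr // in H2; lra.
move=> uu_le0; have uu_eq0 : uu = 0 by lra.
rewrite uu_eq0 mul0r.
have [->|uv_ne0] := eqVneq uv 0; first by rewrite expr0n.
have := pX (v + (- ((vv + 1) / (2 * uv))) *: u); rewrite E uu_eq0 mulr0 addr0.
have -> : 2 * - ((vv + 1) / (2 * uv)) * uv = - (vv + 1).
  by field.
lra.
Qed.

Lemma dotZ (R : realType) n (u w : 'cV[R]_n) k : dot u (k *: w) = k * dot u w.
Proof. by rewrite /dot -scalemxAr mxE. Qed.

Lemma rank1_bform (R : realType) n (X : 'M[R]_n) y x u v :
  (forall u, dot u x = bform u X y / Num.sqrt (bform y X y)) ->
  0 < bform y X y ->
  bform u (x *m x^T) v = bform u X y * bform v X y / bform y X y.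
Proof.
move=> Hx s0; rewrite bform_rank1 !Hx.
have := sqr_sqrtr (ltW s0); set q := Num.sqrt _ => Hq.
have q0 : q != 0 by rewrite sqrtr_eq0 -ltNge.
rewrite -Hq; field; exact: q0.
Qed.

Lemma extract (R : realType) n (X : 'M[R]_n) y :
  psd X -> 0 < bform y X y ->
  exists x, psd (X - x *m x^T) /\
     forall u, dot u x = bform u X y / Num.sqrt (bform y X y).
Proof.
move=> [sX pX0] s0; have pX : forall z, 0 <= bform z X z := pX0.
set s := bform y X y in s0 *.
exists ((Num.sqrt s)^-1 *: (X *m y)); split; last first.
  by move=> u; rewrite dotZ dotXy mulrC.
have Hx := (fun u => (eq_trans (dotZ u _ _) (congr1 _ (dotXy u X y)))).
split.
  by rewrite linearB /= trmx_mul trmxK sX.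
move=> z; change (0 <= bform z (X - (Num.sqrt s)^-1 *: (X *m y) *m ((Num.sqrt s)^-1 *: (X *m y))^T) z).
rewrite bformDm bformNm (rank1_bform (X := X) (y := y)) //; last first.
  by move=> u; rewrite Hx mulrC.
have := pX (z + (- (bform z X y / s)) *: y).
rewrite bform_expand // -/s.
suff -> : bform z X z + 2 * - (bform z X y / s) * bform z X y + (- (bform z X y / s)) ^+ 2 * s
   = bform z X z + - (bform z X y * bform z X y / s) by [].
by field; rewrite gt_eqF.
Qed.

Lemma psd_rank1 (R : realType) n (x : 'cV[R]_n) : psd (x *m x^T).
Proof.
split; first by rewrite trmx_mul trmxK.
move=> z; change (0 <= bform z (x *m x^T) z); rewrite bform_rank1.
by rewrite -expr2 sqr_ge0.
Qed.

Lemma step (R : realType) n (a b c y : 'cV[R]_n) X :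
  Sabc a b c X -> 0 < bform y X y ->
  0 <= bform a X y * bform b X y -> 0 <= bform b X y * bform c X y ->
  0 <= bform a X y * bform c X y ->
  bform a X y * bform b X y <= bform a X b * bform y X y ->
  bform b X y * bform c X y <= bform b X c * bform y X y ->
  bform a X y * bform c X y <= bform a X c * bform y X y ->
  exists x : 'cV[R]_n, Sabc a b c (x *m x^T) /\ Sabc a b c (X - x *m x^T) /\
    (forall u, bform u (X - x *m x^T) u <= bform u X u) /\
    bform y (X - x *m x^T) y = 0.
Proof.
move=> [pX [Hab [Hbc Hac]]] s0 p1 p2 p3 q1 q2 q3.
have [x [pX' Hx]] := extract pX s0.
have E u v : bform u (X - x *m x^T) v = bform u X v - bform u X y * bform v X y / bform y X y.
  by rewrite bformDm bformNm (rank1_bform (X := X) (y := y)).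
have E1 u v : bform u (x *m x^T) v = bform u X y * bform v X y / bform y X y.
  by rewrite (rank1_bform (X := X) (y := y)).
exists x; split; [|split; [|split]].
- split; first exact: psd_rank1.
  by rewrite !E1 !divr_ge0 // ltW.
- split=> //; rewrite !E !subr_ge0 !ler_pdivrMr //.
- move=> u; rewrite E lerBlDr lerDl divr_ge0 ?(ltW s0) //.
  by rewrite -expr2 sqr_ge0.
- rewrite E; field; by rewrite gt_eqF.
Qed.

Lemma bform_delta (R : realType) n (X : 'M[R]_n) i j :
  bform (delta_mx i 0) X (delta_mx j 0) = X i j.
Proof. by rewrite /bform trmx_delta -rowE -colE !mxE. Qed.

Lemma psd_diag0 (R : realType) n (X : 'M[R]_n) :
  psd X -> (forall i, bform (delta_mx i 0) X (delta_mx i 0) = 0) -> X = 0.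
Proof.
move=> pX H; apply/matrixP => i j; rewrite mxE.
have := CS (delta_mx i 0) (delta_mx j 0) pX; rewrite H H mulr0 bform_delta => h.
by apply/eqP; rewrite -sqrf_eq0 eq_le h sqr_ge0.
Qed.

Lemma CS0 (R : realType) n (X : 'M[R]_n) u v :
  psd X -> bform u X u = 0 -> bform u X v = 0.
Proof.
move=> pX h; have := CS u v pX; rewrite h mul0r => h'.
by apply/eqP; rewrite -sqrf_eq0 eq_le h' sqr_ge0.
Qed.

Lemma arith (R : realType) (aa bb cc ab bc ac : R) :
  0 <= aa -> 0 <= bb -> 0 <= cc -> 0 <= ab -> 0 <= bc -> 0 <= ac ->
  ab ^+ 2 <= aa * bb -> bc ^+ 2 <= bb * cc -> ac ^+ 2 <= aa * cc ->
  0 < aa -> 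
  (ab * ac <= bc * aa) \/ (0 < bb /\ ab * bc <= ac * bb) \/ (0 < cc /\ ac * bc <= ab * cc).
Proof.
move=> ? ? ? ? ? ? h1 h2 h3 h4.
have [//|fa] := lerP (ab * ac) (bc * aa); first by left.
right.
have abp : 0 < ab by nra.
have acp : 0 < ac by nra.
have bbp : 0 < bb by nra.
have ccp : 0 < cc by nra.
have [hb|fb] := lerP (ab * bc) (ac * bb); first by left.
have [hc|fc] := lerP (ac * bc) (ab * cc); first by right.
exfalso.
have bcp : 0 < bc by nra.
have : ab * ac * (ab * bc) > bc * aa * (ac * bb).
  by apply: ltr_pM; nra.
nra.
Qed.

Definition ind (R : realType) n (u : 'cV[R]_n) (X : 'M[R]_n) : bool := bform u X u != 0.

Definition mu (R : realType) n (a b c : 'cV[R]_n) (X : 'M[R]_n) : nat :=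
  addn (addn (addn #|[set i : 'I_n | ind (delta_mx i 0) X]| (ind a X)) (ind b X)) (ind c X).

Lemma ind_imp (R : realType) n (X X' : 'M[R]_n) u :
  psd X' -> (forall u, bform u X' u <= bform u X u) -> ind u X' -> ind u X.
Proof.
move=> [_ pX'] Hm; apply: contraNN; rewrite /ind => /eqP h.
have := Hm u; rewrite h => h1; have h2 : 0 <= bform u X' u := pX' u.
by apply/eqP; apply/le_anti; rewrite h1 h2.
Qed.

Lemma b2n_le (b1 b2 : bool) : (b1 -> b2) -> (b1 <= b2)%N.
Proof. by case: b1; case: b2 => // /(_ isT). Qed.

Lemma mu_lt (R : realType) n (a b c y : 'cV[R]_n) (X X' : 'M[R]_n) :
  psd X' -> (forall u, bform u X' u <= bform u X u) ->
  bform y X' y = 0 -> 0 < bform y X y ->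
  (y = a \/ y = b \/ y = c \/ exists i, y = delta_mx i 0) ->
  (mu a b c X' < mu a b c X)%N.
Proof.
move=> pX' Hm hy0 hy hcase.
have Iy : ind y X by rewrite /ind gt_eqF.
have Iy' : ~~ ind y X' by rewrite /ind hy0 eqxx.
have Hsub : [set i : 'I_n | ind (delta_mx i 0) X'] \subset [set i | ind (delta_mx i 0) X].
  by apply/subsetP => i; rewrite !inE; apply: ind_imp.
have Hc := subset_leq_card Hsub.
have Ha := b2n_le (ind_imp (u:=a) pX' Hm).
have Hb := b2n_le (ind_imp (u:=b) pX' Hm).
have Hcc := b2n_le (ind_imp (u:=c) pX' Hm).
rewrite /mu.
case: hcase Iy Iy' => [->|[->|[->|[i ->]]]] Iy Iy'.
- move: Ha Iy Iy'; case: (ind a X); case: (ind a X') => //= _ _ _.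
  move: Hc Hb Hcc; rewrite -/(nat_of_bool _).
  move: (#|_|) (#|_|) (nat_of_bool (ind b X')) (nat_of_bool (ind b X)) (nat_of_bool (ind c X')) (nat_of_bool (ind c X)).
  move=> *; lia.
- move: Hb Iy Iy'; case: (ind b X); case: (ind b X') => //= _ _ _.
  move: Hc Ha Hcc.
  move: (#|_|) (#|_|) (nat_of_bool (ind a X')) (nat_of_bool (ind a X)) (nat_of_bool (ind c X')) (nat_of_bool (ind c X)).
  move=> *; lia.
- move: Hcc Iy Iy'; case: (ind c X); case: (ind c X') => //= _ _ _.
  move: Hc Ha Hb.
  move: (#|_|) (#|_|) (nat_of_bool (ind a X')) (nat_of_bool (ind a X)) (nat_of_bool (ind b X')) (nat_of_bool (ind b X)).
  move=> *; lia.
- have Hp : [set i : 'I_n | ind (delta_mx i 0) X'] \proper [set i | ind (delta_mx i 0) X].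
    by apply/properP; split=> //; exists i; rewrite inE.
  have Hlt := proper_card Hp.
  move: Hlt Ha Hb Hcc.
  move: (#|_|) (#|_|) (nat_of_bool (ind a X')) (nat_of_bool (ind a X)) (nat_of_bool (ind b X')) (nat_of_bool (ind b X)) (nat_of_bool (ind c X')) (nat_of_bool (ind c X)).
  move=> *; lia.
Qed.

Lemma step_mu (R : realType) n (a b c y : 'cV[R]_n) X :
  Sabc a b c X -> 0 < bform y X y ->
  (y = a \/ y = b \/ y = c \/ exists i, y = delta_mx i 0) ->
  0 <= bform a X y * bform b X y -> 0 <= bform b X y * bform c X y ->
  0 <= bform a X y * bform c X y ->
  bform a X y * bform b X y <= bform a X b * bform y X y ->
  bform b X y * bform c X y <= bform b X c * bform y X y ->
  bform a X y * bform c X y <= bform a X c * bform y X y ->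
  exists x : 'cV[R]_n, Sabc a b c (x *m x^T) /\ Sabc a b c (X - x *m x^T) /\
    (mu a b c (X - x *m x^T) < mu a b c X)%N.
Proof.
move=> HS s0 hc p1 p2 p3 q1 q2 q3.
have [x [H1 [H2 [H3 H4]]]] := step HS s0 p1 p2 p3 q1 q2 q3.
exists x; split=> //; split=> //.
exact: (mu_lt H2.1 H3 H4 s0 hc).
Qed.

Lemma decomp (R : realType) n (a b c : 'cV[R]_n) k :
  forall X, (mu a b c X < k)%N -> Sabc a b c X ->
  exists s : seq 'cV[R]_n, (forall x, x \in s -> Sabc a b c (x *m x^T)) /\
    X = \sum_(x <- s) x *m x^T.
Proof.
elim: k => [//|k IH] X Hmu HS.
have key : X = 0 \/ exists x : 'cV[R]_n, Sabc a b c (x *m x^T) /\ Sabc a b c (X - x *m x^T) /\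
    (mu a b c (X - x *m x^T) < mu a b c X)%N.
  have [pX [Hab [Hbc Hac]]] := HS.
  have sX := pX.1.
  have pXu : forall u, 0 <= bform u X u := pX.2.
  have Cab := CS a b pX; have Cbc := CS b c pX; have Cac := CS a c pX.
  have aa0 := pXu a; have bb0 := pXu b; have cc0 := pXu c.
  have [aap|aan] := ltrP 0 (bform a X a).
    right.
    have [h|[[bbp h]|[ccp h]]] := arith aa0 bb0 cc0 Hab Hbc Hac Cab Cbc Cac aap.
    - apply: (step_mu HS aap); [by left | ..]; rewrite ?(bformC b a sX) ?(bformC c a sX); clear IH Hmu HS; nra.
    - apply: (step_mu HS bbp); [by right; left | ..]; rewrite ?(bformC c b sX); clear IH Hmu HS; nra.
    - apply: (step_mu HS ccp); [by right; right; left | ..]; clear IH Hmu HS; nra.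
  have aa : bform a X a = 0 by lra.
  have ab0 := CS0 b pX aa; have ac0 := CS0 c pX aa.
  have [bbp|bbn] := ltrP 0 (bform b X b).
    right; apply: (step_mu HS bbp); [by right; left | ..]; rewrite ?(bformC c b sX) ?ab0 ?ac0; clear IH Hmu HS; nra.
  have bb : bform b X b = 0 by lra.
  have bc0 := CS0 c pX bb.
  have [ccp|ccn] := ltrP 0 (bform c X c).
    right; apply: (step_mu HS ccp); [by right; right; left | ..]; rewrite ?(bformC c b sX) ?(bformC c a sX) ?ab0 ?ac0 ?bc0; clear IH Hmu HS; nra.
  have cc : bform c X c = 0 by lra.
  case: (pickP [pred i | bform (delta_mx i 0) X (delta_mx i 0) != 0]) => [i /= Hi|H0].
    have ip : 0 < bform (delta_mx i 0) X (delta_mx i 0) by rewrite lt_def Hi pXu.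
    right; apply: (step_mu HS ip); [by right; right; right; exists i | ..]; rewrite ?(CS0 _ pX aa) ?(CS0 _ pX bb) ?(CS0 _ pX cc) ?ab0 ?ac0 ?bc0; clear IH Hmu HS; nra.
  left; apply: psd_diag0 => // i; move: (H0 i) => /= /negbFE /eqP //.
case: key => [->|[x [H1 [H2 H3]]]].
  by exists [::]; rewrite big_nil.
have [s [Hs Hsum]] := IH (X - x *m x^T) (leq_trans H3 Hmu) H2.
exists (x :: s); split.
  by move=> z; rewrite in_cons => /orP [/eqP ->|/Hs].
by rewrite big_cons -Hsum addrC subrK.
Qed.

Lemma Sabc_conv (R : realType) n (a b c : 'cV[R]_n) k (l : 'I_k -> R) (Y : 'I_k -> 'M[R]_n) :
  (forall i, 0 <= l i) -> (forall i, Sabc a b c (Y i)) ->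
  Sabc a b c (\sum_(i < k) l i *: Y i).
Proof.
move=> l0 HY.
have G u v : (forall i, 0 <= bform u (Y i) v) -> 0 <= bform u (\sum_(i < k) l i *: Y i) v.
  move=> h; rewrite bform_sum; apply: sumr_ge0 => i _; rewrite bformZm.
  exact: mulr_ge0.
split; last first.
  by split; [|split]; apply: G => i; have [_ [? [? ?]]] := HY i.
split.
  rewrite linear_sum; apply: eq_bigr => i _ /=; rewrite linearZ /=.
  by have [[-> _] _] := HY i.
move=> z; apply: G => i; have [[_ h] _] := HY i; exact: h.
Qed.

Lemma rank1_scale (R : realType) n (r : R) (v : 'cV[R]_n) :
  (r *: v) *m (r *: v)^T = (r * r) *: (v *m v^T).
Proof. by rewrite linearZ /= -scalemxAl -scalemxAr scalerA. Qed.

Lemma Sabc0 (R : realType) n (a b c : 'cV[R]_n) : Sabc a b c (0 : 'M[R]_n).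
Proof.
have := @Sabc_conv R n a b c 0 (fun _ => 0) (fun _ => 0).
by rewrite big_ord0; apply=> -[].
Qed.

Lemma Sabc_scale (R : realType) n (a b c : 'cV[R]_n) (r : R) X :
  0 <= r -> Sabc a b c X -> Sabc a b c (r *: X).
Proof.
move=> r0 HX.
have := @Sabc_conv R n a b c 1 (fun _ => r) (fun _ => X).
by rewrite big_ord1; apply.
Qed.

Theorem theorem3p7 (R : realType) (n : nat) (a b c : 'cV[R]_n) :
  ROG (Sabc a b c).
Proof.
move=> X; split; last first.
  move=> [k [l [Y [l0 [_ [HY ->]]]]]].
  by apply: Sabc_conv => // i; have [] := HY i.
move=> HS.
have [s [Hs HX]] := decomp (ltnSn (mu a b c X)) HS.
set k := (size s).+1.
have k0 : 0 < k%:R :> R by rewrite ltr0n.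
set r := Num.sqrt (k%:R : R).
have rr : r * r = k%:R by rewrite -expr2 sqr_sqrtr // ltW.
pose w (i : 'I_k) := r *: nth 0 s i.
exists k, (fun _ => k%:R^-1), (fun i => w i *m (w i)^T).
split; first by move=> i; rewrite invr_ge0 ltW.
split.
  rewrite sumr_const card_ord -(mulr_natl (k%:R^-1) k) mulfV //; exact: lt0r_neq0.
split.
  move=> i; split; last by exists (w i).
  rewrite /w rank1_scale rr; apply: Sabc_scale; first exact: ltW.
  have [lt_is|ge_is] := ltnP i (size s).
    by apply: Hs; exact: mem_nth.
  by rewrite nth_default // mul0mx; exact: Sabc0.
rewrite HX.
have -> : \sum_(i < k) k%:R^-1 *: (w i *m (w i)^T) = \sum_(i < k) nth 0 s i *m (nth 0 s i)^T.
  apply: eq_bigr => i _; rewrite /w rank1_scale rr scalerA mulVf ?scale1r //.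
  exact: lt0r_neq0.
rewrite big_ord_recr /= nth_default // mul0mx addr0.
by rewrite (big_nth 0) big_mkord.
Qed.
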